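(* Let $(z,x)$ be a feasible solution of the cluster LP for vertex set $V$. Run the following cluster-based rounding: set $\mathcal C\gets\emptyset$, $V'\gets V$; while $V'\neq\emptyset$, choose a set $S$ at random with probability $z_S/\sum_{S'}z_{S'}$ (independently in each iteration), and if $V'\cap S\neq\emptyset$, add $V'\cap S$ to $\mathcal C$ and set $V'\gets V'\setminus S$; output $\mathcal C$. Then for every $uv\in\binom V2$, the probability that $u$ and $v$ are in different clusters of the output $\mathcal C$ is $\frac{2x_{uv}}{1+x_{uv}}$, and the probability that they are in the same cluster is $\frac{1-x_{uv}}{1+x_{uv}}$.
   Context: The cluster LP for a finite vertex set $V$ has a variable $z_S$ for every nonempty $S\subseteq V$ and $x_{uv}$ for every unordered pair $uv$ of distinct vertices, with constraints $\sum_{S\ni u}z_S=1$ for all $u\in V$, $\sum_{S\supseteq\{u,v\}}z_S=1-x_{uv}$ for all $uv$, and $z_S\ge0$. *)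

(* Defs.v *)
From HB Require Import structures.
From mathcomp Require Import all_boot all_order all_algebra.
From mathcomp Require Import all_classical all_reals topology normedtype sequences.
Set Implicit Arguments. Unset Strict Implicit. Unset Printing Implicit Defensive.
Import Order.TTheory GRing.Theory Num.Theory.
Local Open Scope ring_scope.

Section ClusterLP.
Variables (R : realType) (T : finType).

(* Cluster LP on vertex set V = (finset.setTfor T): variables z_S for nonempty S
   (the value z finset.set0 is ignored) and x_uv for distinct u v. *)
Definition cluster_lp_feasible (z : {set T} -> R) (x : T -> T -> R) : Prop :=
  [/\ forall u : T, \sum_(S : {set T} | u \in S) z S = 1,
      forall u v : T, u != v ->
        \sum_(S : {set T} | (u \in S) && (v \in S)) z S = 1 - x u v
    & forall S : {set T}, S != finset.set0 -> 0 <= z S].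

Definition zw (z : {set T} -> R) (S : {set T}) : R := if S == finset.set0 then 0 else z S.

Definition pick_prob (z : {set T} -> R) (S : {set T}) : R :=
  zw z S / \sum_(S' : {set T}) zw z S'.

(* state of the rounding: (V', current clustering C) *)
Definition rstate := ({set T} * {set {set T}})%type.

Definition rinit : rstate := ((finset.setTfor T), finset.set0).

(* one iteration of the loop with the sampled set S
   (when V' is empty nothing changes, i.e. the process has stopped) *)
Definition rstep (s : rstate) (S : {set T}) : rstate :=
  if s.1 :&: S != finset.set0 then (s.1 :\: S, (s.1 :&: S) |: s.2) else s.

Fixpoint rdist (z : {set T} -> R) (k : nat) : rstate -> R :=
  match k with
  | 0 => fun s => (s == rinit)%:R
  | k'.+1 => fun s' =>
      \sum_(s : rstate) rdist z k' s *
        \sum_(S : {set T} | rstep s S == s') pick_prob z S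
  end.

Definition sep_event (u v : T) (s : rstate) : bool :=
  (s.1 == finset.set0) &&
  [exists A in s.2, exists B in s.2, [&& A != B, u \in A & v \in B]].

Definition same_event (u v : T) (s : rstate) : bool :=
  (s.1 == finset.set0) && [exists A in s.2, (u \in A) && (v \in A)].

Definition prob_by (z : {set T} -> R) (E : pred rstate) (k : nat) : R :=
  \sum_(s : rstate | E s) rdist z k s.

End ClusterLP.

(* Main.v *)
Require Import Defs.
From HB Require Import structures.
From mathcomp Require Import all_boot all_order all_algebra.
From mathcomp Require Import all_classical all_reals topology normedtype sequences.
From mathcomp Require Import ring lra.
Import Order.TTheory GRing.Theory Num.Theory.
Import numFieldNormedType.Exports.
Local Open Scope ring_scope.

Section Pf.
Variables (R : realType) (T : finType) (z : {set T} -> R) (x : T -> T -> R).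
Hypothesis Hf : cluster_lp_feasible z x.
Variables (u v : T).
Hypothesis huv : u != v.

Lemma sum_ind (I : finType) (F : I -> R) (P : pred I) :
  \sum_i F i * (P i)%:R = \sum_(i | P i) F i.
Proof. rewrite [RHS]big_mkcond /=; apply: eq_bigr => i _; by case: (P i); rewrite ?mulr1 ?mulr0. Qed.

Lemma zw_ge0 S : 0 <= zw z S.
Proof. rewrite /zw; case: eqP => [_|/eqP]; first by []. by case: Hf => _ _ H; apply: H. Qed.

Lemma sum_zw_in w : \sum_S zw z S * (w \in S)%:R = 1.
Proof.
rewrite sum_ind; case: Hf => H1 _ _; rewrite -(H1 w).
apply: eq_bigr => S wS; rewrite /zw; case: eqP => // S0.
by rewrite S0 inE in wS.
Qed.

Lemma sum_zw_both : \sum_S zw z S * ((u \in S) && (v \in S))%:R = 1 - x u v.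
Proof.
rewrite sum_ind; case: Hf => _ H2 _; rewrite -(H2 u v huv).
apply: eq_bigr => S /andP[wS _]; rewrite /zw; case: eqP => // S0.
by rewrite S0 inE in wS.
Qed.

Definition W := \sum_S zw z S.

Lemma W_ge1 : 1 <= W.
Proof.
rewrite -(sum_zw_in u) /W; apply: ler_sum => S _.
by case: (u \in S); rewrite ?mulr1 ?mulr0 ?zw_ge0.
Qed.

Lemma W_gt0 : 0 < W.
Proof. exact: lt_le_trans ltr01 W_ge1. Qed.

Lemma x_ge0 : 0 <= x u v.
Proof.
have : 1 - x u v <= 1.
  rewrite -sum_zw_both -[X in _ <= X](sum_zw_in u); apply: ler_sum => S _.
  by case: (u \in S); case: (v \in S); rewrite /= ?mulr1 ?mulr0 ?zw_ge0 ?lexx. 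
lra.
Qed.

Lemma sum_zw_hit : \sum_S zw z S * ((u \in S) || (v \in S))%:R = 1 + x u v.
Proof.
transitivity (\sum_S (zw z S * (u \in S)%:R + zw z S * (v \in S)%:R
   - zw z S * ((u \in S) && (v \in S))%:R)).
  apply: eq_bigr => S _.
  by case: (u \in S); case: (v \in S); rewrite /= ?mulr1 ?mulr0 ?subr0 ?addr0 ?add0r ?addrK.
rewrite sumrB big_split /= !sum_zw_in sum_zw_both; lra.
Qed.

Lemma hit_le : 1 + x u v <= W.
Proof.
rewrite -sum_zw_hit; apply: ler_sum => S _.
by case: (_ || _); rewrite ?mulr1 ?mulr0 ?zw_ge0.
Qed.

Lemma pp_ge0 S : 0 <= pick_prob z S.
Proof. by rewrite /pick_prob divr_ge0 ?zw_ge0 // (le_trans ler01 W_ge1). Qed.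

Lemma sum_pp_ind (P : pred {set T}) :
  \sum_S pick_prob z S * (P S)%:R = (\sum_S zw z S * (P S)%:R) / W.
Proof. rewrite mulr_suml; apply: eq_bigr => S _; by rewrite /pick_prob mulrAC. Qed.

Lemma sum_pp : \sum_S pick_prob z S = 1.
Proof.
rewrite /pick_prob -mulr_suml -/W divff //; exact: lt0r_neq0 W_gt0.
Qed.


Definition EX k (g : rstate T -> R) := \sum_(s : rstate T) rdist z k s * g s.

Lemma EX_step k g :
  EX k.+1 g = EX k (fun s => \sum_S pick_prob z S * g (rstep s S)).
Proof.
rewrite /EX /=.
under eq_bigr do rewrite mulr_suml.
rewrite exchange_big /=; apply: eq_bigr => s _.
under eq_bigr do rewrite -mulrA mulr_suml.
rewrite -mulr_sumr; congr (_ * _).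
rewrite (exchange_big_dep xpredT) //=; apply: eq_bigr => S _.
rewrite (big_pred1 (rstep s S)) // => s' /=; by rewrite eq_sym.
Qed.

Lemma rdist_ge0 k s : 0 <= rdist z k s.
Proof.
elim: k s => [|k IH] s /=; first by rewrite ler0n.
apply: sumr_ge0 => s0 _; apply: mulr_ge0 => //; apply: sumr_ge0 => S _; exact: pp_ge0.
Qed.

Lemma EX_ext k g g' : (forall s, rdist z k s != 0 -> g s = g' s) -> EX k g = EX k g'.
Proof.
move=> H; apply: eq_bigr => s _; case: (eqVneq (rdist z k s) 0) => [->|/H ->];
  by rewrite ?mul0r.
Qed.

Lemma EX_le k g g' : (forall s, g s <= g' s) -> EX k g <= EX k g'.
Proof. move=> H; apply: ler_sum => s _; apply: ler_wpM2l => //; exact: rdist_ge0. Qed.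

Lemma EX_ge0 k g : (forall s, 0 <= g s) -> 0 <= EX k g.
Proof. move=> H; apply: sumr_ge0 => s _; apply: mulr_ge0 => //; exact: rdist_ge0. Qed.

Lemma EX_B k g g' : EX k (fun s => g s - g' s) = EX k g - EX k g'.
Proof. rewrite /EX -sumrB; apply: eq_bigr => s _; by rewrite mulrBr. Qed.

Lemma EX_D k g g' : EX k (fun s => g s + g' s) = EX k g + EX k g'.
Proof. rewrite /EX -big_split; apply: eq_bigr => s _; by rewrite mulrDr. Qed.

Lemma EX_Z k a g : EX k (fun s => g s * a) = EX k g * a.
Proof. rewrite /EX mulr_suml; apply: eq_bigr => s _; by rewrite mulrA. Qed.

Lemma EX_sum k (g : T -> rstate T -> R) :
  EX k (fun s => \sum_w g w s) = \sum_w EX k (g w).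
Proof. rewrite /EX; under eq_bigr do rewrite mulr_sumr; exact: exchange_big. Qed.

Lemma EX_1 k : EX k (fun _ => 1) = 1.
Proof.
elim: k => [|k IH].
  rewrite /EX (bigD1 (rinit T)) //= eqxx mulr1 big1 ?addr0 // => s /negbTE ->.
  by rewrite mul0r.
by rewrite EX_step; under [X in EX k X]funext => s do rewrite (eq_bigr _ (fun S _ => mulr1 _)) sum_pp.
Qed.

Lemma prob_EX E k : prob_by z E k = EX k (fun s => (E s)%:R).
Proof. by rewrite /prob_by /EX sum_ind. Qed.

Lemma disjP (A B : {set T}) : reflect (forall w, w \in A -> w \in B -> False) [disjoint A & B].
Proof.
rewrite disjoint_subset; apply: (iffP fintype.subsetP) => H w.
  by move=> wA wB; have := H w wA; rewrite inE wB.
by move=> wA; rewrite inE; apply/negP => wB; exact: H wA wB.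
Qed.

Definition Inv (s : rstate T) : Prop :=
  [/\ forall A, A \in s.2 -> [disjoint A & s.1],
      forall w, w \notin s.1 -> exists2 A, A \in s.2 & w \in A
    & forall A B, A \in s.2 -> B \in s.2 -> A != B -> [disjoint A & B]].

Lemma Inv_init : Inv (rinit T).
Proof. by split => [A|w|A B]; rewrite /rinit /= ?inE. Qed.

Lemma Inv_step (s : rstate T) (S : {set T}) : Inv s -> Inv (rstep s S).
Proof.
case=> Ha Hb Hc; rewrite /rstep; case: ifP => // hne /=; split.
- move=> A; rewrite in_setU1 => /orP[/eqP->|hAC].
    by apply/disjP => w; rewrite !inE => /andP[-> ->].
  apply/disjP => w wA; rewrite inE => /andP[_ ws].
  by move/disjP: (Ha A hAC) => /(_ w wA); apply.
- move=> w; rewrite inE negb_and negbK => /orP[wS|ws].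
    case: (boolP (w \in s.1)) => ws.
      by exists (s.1 :&: S); rewrite ?setU11 // inE ws.
    by case: (Hb w ws) => A hAC wA; exists A => //; rewrite in_setU1 hAC orbT.
  by case: (Hb w ws) => A hAC wA; exists A => //; rewrite in_setU1 hAC orbT.
- move=> A B; rewrite !in_setU1 => /orP[/eqP->|hAC] /orP[/eqP->|hBC]; rewrite ?eqxx //.
  + move=> _; apply/disjP => w; rewrite inE => /andP[ws _] wB.
    by move/disjP: (Ha B hBC) => /(_ w wB); apply.
  + move=> _; apply/disjP => w wA; rewrite inE => /andP[ws _].
    by move/disjP: (Ha A hAC) => /(_ w wA); apply.
  + exact: Hc.
Qed.

Lemma reach k s : rdist z k s != 0 -> Inv s.
Proof.
elim: k s => [|k IH] s /=.
  by rewrite pnatr_eq0 eqb0 negbK => /eqP ->; exact: Inv_init.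
move=> hne.
case: (pickP (fun s0 => rdist z k s0 * (\sum_(S | rstep s0 S == s) pick_prob z S) != 0))
  => [s0 /= Hs0|H0]; last first.
  by move: hne; rewrite big1 ?eqxx // => s0 _; apply/eqP; move/negbFE: (H0 s0).
move: Hs0; rewrite mulf_eq0 negb_or => /andP[r0 hS].
case: (pickP (fun S => rstep s0 S == s)) => [S /eqP <-|H0].
  exact/Inv_step/IH.
by move: hS; rewrite big_pred0 ?eqxx.
Qed.

Definition Pb (t : rstate T) := (u \in t.1) && (v \in t.1).
Definition sameC (t : rstate T) := [exists A in t.2, (u \in A) && (v \in A)].
Definition sepC (t : rstate T) :=
  [exists A in t.2, exists B in t.2, [&& A != B, u \in A & v \in B]].

Lemma memstep (w : T) (s : rstate T) (S : {set T}) : (w \in (rstep s S).1) = (w \in s.1) && (w \notin S).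
Proof.
rewrite /rstep; case: ifP => hne /=; first by rewrite inE andbC.
case hw: (w \in s.1) => //=; apply/esym/negP => wS.
move/negbFE/eqP: hne => hne.
have : w \in s.1 :&: S by rewrite inE hw wS.
by rewrite hne inE.
Qed.

Lemma sameC_step (s : rstate T) (S : {set T}) :
  sameC (rstep s S) = sameC s || [&& u \in s.1, v \in s.1, u \in S & v \in S].
Proof.
rewrite /rstep; case: ifP => hne /=.
  apply/idP/idP.
    case/existsP => A /andP[]; rewrite in_setU1 => /orP[/eqP->|hAC] /andP[uA vA].
      by move: uA vA; rewrite !inE => /andP[-> ->] /andP[-> ->]; rewrite orbT.
    by apply/orP; left; apply/existsP; exists A; rewrite hAC uA vA.
  case/orP => [/existsP[A /andP[hAC /andP[uA vA]]] | /and4P[us vs uS vS]].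
    by apply/existsP; exists A; rewrite in_setU1 hAC orbT uA vA.
  by apply/existsP; exists (s.1 :&: S); rewrite setU11 !inE us vs uS vS.
case H: [&& _, _, _ & _]; last by rewrite orbF.
move/and4P: H => [us _ uS _].
move/negbFE/eqP: hne => hne.
have : u \in s.1 :&: S by rewrite inE us uS.
by rewrite hne inE.
Qed.

Lemma Inv_P_nsame (s : rstate T) : Inv s -> Pb s -> ~~ sameC s.
Proof.
case=> Ha _ _ /andP[us _]; apply/negP => /existsP[A /andP[hAC /andP[uA _]]].
by move/disjP: (Ha A hAC) => /(_ u uA); apply.
Qed.

Lemma Inv_term (s : rstate T) : Inv s -> s.1 == finset.set0 -> sepC s = ~~ sameC s.
Proof.
case=> Ha Hb Hc /eqP s0; apply/idP/idP.
  case/existsP => A /andP[hAC /existsP[B /andP[hBC /and3P[AB uA vB]]]].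
  apply/negP => /existsP[D /andP[hDC /andP[uD vD]]].
  case: (eqVneq D A) => [DA|DA].
    by subst D; move/disjP: (Hc A B hAC hBC AB) => /(_ v vD); apply.
  by move/disjP: (Hc D A hDC hAC DA) => /(_ u uD); apply.
move=> ns.
have [A hAC uA] : exists2 A, A \in s.2 & u \in A by apply: Hb; rewrite s0 inE.
have [B hBC vB] : exists2 B, B \in s.2 & v \in B by apply: Hb; rewrite s0 inE.
apply/existsP; exists A; rewrite hAC /=; apply/existsP; exists B; rewrite hBC uA vB !andbT /=.
apply/negP => /eqP AB; subst B; move/negP: ns; apply; apply/existsP; exists A.
by rewrite hAC uA vB.
Qed.

Lemma EX0 g : EX 0 g = g (rinit T).
Proof.
rewrite /EX (bigD1 (rinit T)) //= eqxx mul1r big1 ?addr0 // => s /negbTE ->.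
by rewrite mul0r.
Qed.

Definition q := 1 - (1 + x u v) / W.
Definition rho := 1 - W^-1.
Definition c := (1 - x u v) / (1 + x u v).

Lemma sum_pp_hitw w : \sum_S pick_prob z S * (w \in S)%:R = W^-1.
Proof. by rewrite sum_pp_ind sum_zw_in mul1r. Qed.

Lemma sum_pp_hit : \sum_S pick_prob z S * ((u \in S) || (v \in S))%:R = (1 + x u v) / W.
Proof. by rewrite sum_pp_ind sum_zw_hit. Qed.

Lemma sum_pp_both : \sum_S pick_prob z S * ((u \in S) && (v \in S))%:R = (1 - x u v) / W.
Proof. by rewrite sum_pp_ind sum_zw_both. Qed.

Lemma step_w w (s : rstate T) :
  \sum_S pick_prob z S * (w \in (rstep s S).1)%:R = (w \in s.1)%:R * rho.
Proof.
transitivity (\sum_S ((w \in s.1)%:R * (pick_prob z S - pick_prob z S * (w \in S)%:R))).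
  apply: eq_bigr => S _; rewrite memstep.
  by case: (w \in s.1); case: (w \in S); rewrite /= ?mulr1 ?mulr0 ?mul1r ?mul0r ?subrr ?subr0.
by rewrite -mulr_sumr sumrB sum_pp sum_pp_hitw.
Qed.

Lemma step_P (s : rstate T) :
  \sum_S pick_prob z S * (Pb (rstep s S))%:R = (Pb s)%:R * q.
Proof.
transitivity (\sum_S ((Pb s)%:R * (pick_prob z S - pick_prob z S * ((u \in S) || (v \in S))%:R))).
  apply: eq_bigr => S _; rewrite /Pb !memstep.
  by case: (u \in s.1); case: (v \in s.1); case: (u \in S); case: (v \in S);
    rewrite /= ?mulr1 ?mulr0 ?mul1r ?mul0r ?subrr ?subr0.
by rewrite -mulr_sumr sumrB sum_pp sum_pp_hit.
Qed.

Lemma step_same (s : rstate T) : Inv s ->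
  \sum_S pick_prob z S * (sameC (rstep s S))%:R
    = (sameC s)%:R + (Pb s)%:R * ((1 - x u v) / W).
Proof.
move=> hI; case: (boolP (Pb s)) => hP.
  have /negbTE hs := Inv_P_nsame _ hI hP.
  move: hP; rewrite /Pb => /andP[us vs].
  rewrite hs add0r mul1r -sum_pp_both; apply: eq_bigr => S _.
  by rewrite sameC_step hs us vs.
rewrite mul0r addr0.
transitivity (\sum_S pick_prob z S * (sameC s)%:R).
  apply: eq_bigr => S _; rewrite sameC_step.
  by move: hP; rewrite /Pb; case: (u \in s.1); case: (v \in s.1); rewrite //= orbF.
by rewrite -mulr_suml sum_pp mul1r.
Qed.

Lemma pk k : EX k (fun s => (Pb s)%:R) = q ^+ k.
Proof.
elim: k => [|k IH]; first by rewrite EX0 /Pb /rinit /= !inE.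
rewrite EX_step; under [X in EX k X]funext => s do rewrite step_P.
by rewrite EX_Z IH exprSr.
Qed.

Lemma wk w k : EX k (fun s => (w \in s.1)%:R) = rho ^+ k.
Proof.
elim: k => [|k IH]; first by rewrite EX0 /rinit /= !inE.
rewrite EX_step; under [X in EX k X]funext => s do rewrite step_w.
by rewrite EX_Z IH exprSr.
Qed.

Lemma W_neq0 : W != 0. Proof. exact: lt0r_neq0 W_gt0. Qed.
Lemma hx_neq0 : 1 + x u v != 0.
Proof. apply: lt0r_neq0; have := x_ge0; lra. Qed.

Lemma mk k : EX k (fun s => (sameC s)%:R) = c * (1 - q ^+ k).
Proof.
elim: k => [|k IH].
  by rewrite EX0 /sameC /rinit /= expr0 subrr mulr0; apply/eqP; rewrite pnatr_eq0 eqb0;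
     apply/existsP => -[A]; rewrite inE.
rewrite EX_step.
rewrite (@EX_ext k _ (fun s => (sameC s)%:R + (Pb s)%:R * ((1 - x u v) / W))); last first.
  by move=> s /reach hI; rewrite step_same.
rewrite EX_D EX_Z IH pk exprS /c /q.
have := W_neq0; have := hx_neq0; move: (q ^+ k) => Q h1 h2.
by field; rewrite h1 h2.
Qed.

Definition tk k := EX k (fun s => (s.1 != finset.set0)%:R).
Definition ek k := EX k (fun s => ((s.1 != finset.set0) && sameC s)%:R).

Lemma tk_le k : tk k <= #|T|%:R * rho ^+ k.
Proof.
apply: (@le_trans _ _ (EX k (fun s => \sum_w (w \in s.1)%:R))).
  apply: EX_le => s; case: (boolP (s.1 != finset.set0)) => h.
    move/finset.set0Pn: h => [w hw]; rewrite (bigD1 w) //= hw lerDl.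
    by apply: sumr_ge0 => i _; rewrite ler0n.
  by apply: sumr_ge0 => i _; rewrite ler0n.
rewrite EX_sum; under eq_bigr do rewrite wk.
by rewrite sumr_const mulr_natl.
Qed.

Lemma tk_ge0 k : 0 <= tk k.
Proof. by apply: EX_ge0 => s; rewrite ler0n. Qed.

Lemma ek_ge0 k : 0 <= ek k.
Proof. by apply: EX_ge0 => s; rewrite ler0n. Qed.

Lemma ek_le k : ek k <= tk k.
Proof. by apply: EX_le => s; case: (_ != _); case: (sameC s). Qed.

Lemma prob_same_eq k : prob_by z (same_event u v) k = c * (1 - q ^+ k) - ek k.
Proof.
rewrite prob_EX -mk /ek -EX_B; apply: EX_ext => s _.
rewrite /same_event /sameC.
by case: (_ == _); case: [exists _ in _, _]; rewrite /= ?subrr ?subr0.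
Qed.

Lemma prob_sep_eq k :
  prob_by z (sep_event u v) k = 1 - tk k - prob_by z (same_event u v) k.
Proof.
rewrite (prob_EX (same_event u v)) -[X in _ = X - _ - _](EX_1 k) /tk -!EX_B prob_EX; apply: EX_ext => s /reach hI.
rewrite /sep_event /same_event.
case E: (s.1 == finset.set0) => /=.
  have := Inv_term s hI E; rewrite /sepC /sameC => ->.
  by case: [exists _ in _, _]; rewrite /= ?subr0 ?sub0r ?subrr.
by rewrite subrr subr0.
Qed.
Local Open Scope classical_set_scope.

Lemma hq : `|q| < 1.
Proof.
have h1 : 0 < (1 + x u v) / W by rewrite divr_gt0 ?W_gt0 //; have := x_ge0; lra.
have h2 : (1 + x u v) / W <= 1 by rewrite ler_pdivrMr ?W_gt0 // mul1r hit_le.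
rewrite /q ger0_norm; lra.
Qed.

Lemma hrho : `|rho| < 1.
Proof.
have h1 : 0 < W^-1 by rewrite invr_gt0 W_gt0.
have h2 : W^-1 <= 1 by rewrite -div1r ler_pdivrMr ?W_gt0 // mul1r W_ge1.
rewrite /rho ger0_norm; lra.
Qed.

Lemma mk_cvg : (fun k => c * (1 - q ^+ k)) @ \oo --> c.
Proof.
have := cvgMl_tmp (F:=\oo) (a:=c) (cvgB (F:=\oo) (cvg_cst (1:R)) (cvg_expr hq)).
rewrite subr0 mulr1; apply; exact: eventually_filter.
Qed.

Lemma rk_cvg : (fun k => #|T|%:R * rho ^+ k) @ \oo --> (0 : R).
Proof.
have := cvgMl_tmp (F:=\oo) (a:=(#|T|%:R : R)) (cvg_expr hrho).
rewrite mulr0; apply; exact: eventually_filter.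
Qed.

Lemma tk_cvg : tk @ \oo --> (0 : R).
Proof.
apply: (@squeeze_cvgr _ _ _ _ (fun=> 0) (fun k => #|T|%:R * rho ^+ k)).
- by apply: nearW => k; rewrite tk_ge0 tk_le.
- exact: cvg_cst.
- exact: rk_cvg.
Qed.

Lemma same_cvg : prob_by z (same_event u v) @ \oo --> c.
Proof.
apply: (@squeeze_cvgr _ _ _ _ (fun k => c * (1 - q ^+ k) - #|T|%:R * rho ^+ k)
   (fun k => c * (1 - q ^+ k))).
- apply: nearW => k; rewrite prob_same_eq; apply/andP; split.
    by have := ek_le k; have := tk_le k; lra.
  by have := ek_ge0 k; lra.
- have := cvgB (F:=\oo) mk_cvg rk_cvg; rewrite subr0; apply; exact: eventually_filter.
- exact: mk_cvg.
Qed.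

Lemma sep_cvg : prob_by z (sep_event u v) @ \oo --> (2 * x u v / (1 + x u v)).
Proof.
have -> : prob_by z (sep_event u v) = (fun k => 1 - tk k - prob_by z (same_event u v) k).
  by apply/funext => k; exact: prob_sep_eq.
have -> : 2 * x u v / (1 + x u v) = 1 - 0 - c.
  by rewrite /c subr0; move: hx_neq0 => h; field.
have := cvgB (F:=\oo) (cvgB (F:=\oo) (cvg_cst (1:R)) tk_cvg) same_cvg; apply; exact: eventually_filter.
Qed.

Lemma final : (prob_by z (sep_event u v) @ \oo --> (2 * x u v / (1 + x u v) : R)) /\
    (prob_by z (same_event u v) @ \oo --> ((1 - x u v) / (1 + x u v) : R)).
Proof. split; [exact: sep_cvg | exact: same_cvg]. Qed.

End Pf.

Local Open Scope classical_set_scope.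

Theorem lemma1 (R : realType) (T : finType) (z : {set T} -> R) (x : T -> T -> R) :
  cluster_lp_feasible z x ->
  forall u v : T, u != v ->
    (prob_by z (sep_event u v) @ \oo --> (2 * x u v / (1 + x u v) : R)) /\
    (prob_by z (same_event u v) @ \oo --> ((1 - x u v) / (1 + x u v) : R)).
Proof. move=> Hf u v huv; exact: (@final R T z x Hf u v huv). Qed.
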